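(* Let $l$ and $r$ be positive integers with $l\geq 2r$, and let $f$ be a real function on the nonnegative integers with $f(n)=a_ln^l+a_{l-1}n^{l-1}+\cdots+a_{l-2r}n^{l-2r}+o(n^{l-2r})$ as $n\to\infty$, where $a_l,\ldots,a_{l-2r}$ are real constants and $a_l\neq 0$. Then for every $1\leq j\leq r$ there are real numbers $z_{3,j},\ldots,z_{2(r-j+1),j}$ such that $$\left(\mathcal R^2\widehat{\mathcal L}^{j-1}f\right)(n)=1+\frac{2^j-2^{j-1}l-2}{n^2}+\sum_{i=3}^{2(r-j+1)}\frac{z_{i,j}}{n^i}+o\!\left(\frac{1}{n^{2(r-j+1)}}\right)\quad(n\to\infty).$$
   Context: For a real function (sequence) $g$ on the nonnegative integers, $(\widehat{\mathcal L}g)(n)=g(n+1)^2-g(n)g(n+2)$, $\widehat{\mathcal L}^0 g=g$ and $\widehat{\mathcal L}^jg=\widehat{\mathcal L}(\widehat{\mathcal L}^{j-1}g)$; and $(\mathcal R^2g)(n)=\frac{g(n)g(n+2)}{g(n+1)^2}$ (defined for $n$ large enough that $g(n+1)\ne0$). *)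

(* Defs.v *)
From Stdlib Require Import Reals List Arith.
Import ListNotations.
Open Scope R_scope.

(* sum_range m n F = F m + F (m+1) + ... + F n  (empty if n < m) *)
Definition sum_range (m n : nat) (F : nat -> R) : R :=
  fold_right Rplus 0 (map F (seq m (S n - m))).

Definition Lhat (g : nat -> R) : nat -> R :=
  fun n => g (S n) ^ 2 - g n * g (S (S n)).

Definition Lhat_iter (j : nat) (g : nat -> R) : nat -> R :=
  Nat.iter j Lhat g.

(* (R^2 g)(n) = g(n) g(n+2) / g(n+1)^2  (total division; only large n matter) *)
Definition R2 (g : nat -> R) : nat -> R :=
  fun n => g n * g (S (S n)) / g (S n) ^ 2.

Definition little_o_pow (e : nat -> R) (m : nat) : Prop :=
  forall eps : R, 0 < eps -> exists N : nat, forall n : nat, (N <= n)%nat ->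
    Rabs (e n) <= eps * INR n ^ m.

Definition little_o_invpow (e : nat -> R) (m : nat) : Prop :=
  forall eps : R, 0 < eps -> exists N : nat, forall n : nat, (N <= n)%nat ->
    Rabs (e n) * INR n ^ m <= eps.

(* Main.v *)
Require Import Defs.
From Stdlib Require Import Reals List Arith Lia Lra.
From HB Require Import structures.
From mathcomp Require all_boot all_algebra Rstruct ring zify.
Module P.
Import all_boot all_algebra Rstruct ring zify.
Import GRing.Theory Num.Theory.
Local Open Scope ring_scope.
Definition RP := {poly R}.
Lemma Mlem i : leq (size ((('X + 1) ^+ i - 'X^i) : RP)) i /\ (('X + 1) ^+ i - 'X^i : RP)`_i.-1 = i%:R.
Proof.
elim: i => [|i [IHs IHc]]; first by rewrite expr0 subrr size_poly0 coef0.
set A := (('X + 1) ^+ i - 'X^i : RP) in IHs IHc *.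
have -> : (('X + 1) ^+ i.+1 - 'X^(i.+1) : RP) = 'X * A + A + 'X^i.
  rewrite /A !exprS. ring.
clearbody A. have H := (leq_sizeP _ _ IHs).
split.
  apply/leq_sizeP => j hj.
  case: j hj => [|j] hj //.
  rewrite !coefD coefXM coefXn /= (H j) // (H j.+1) ?(ltnW hj) // (gtn_eqF hj).
  by rewrite /= !add0r.
rewrite !coefD coefXM coefXn /= eqxx (H i) // addr0.
case: i IHc {IHs H} => [|i] /= IHc.
- by rewrite add0r.
- by rewrite IHc natr1.
Qed.

Definition Dl (p : RP) : RP := p \Po ('X + 1) - p.
Lemma Dl_add (p : RP) q : Dl (p + q) = Dl p + Dl q.
Proof. rewrite /Dl comp_polyD. ring. Qed.
Lemma Dl_scale c p : Dl (c *: p) = c *: Dl p.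
Proof. by rewrite /Dl comp_polyZ scalerBr. Qed.
Lemma Dl0 : Dl 0 = 0.
Proof. by rewrite /Dl comp_poly0 subr0. Qed.

Lemma decomp_size (p : RP) d : leq (size p) d.+1 -> leq (size (p - p`_d *: 'X^d)) d.
Proof.
move=> hs; have H := leq_sizeP _ _ hs.
apply/leq_sizeP => j hj; rewrite coefB coefZ coefXn.
case: (ltngtP j d) => hjd.
- by move: hj; rewrite leqNgt hjd.
- by rewrite (H j hjd) mulr0 subrr.
- by rewrite hjd mulr1 subrr.
Qed.

Lemma Dlem d (p : RP) : leq (size p) d.+1 -> leq (size (Dl p)) d /\ (Dl p)`_d.-1 = d%:R * p`_d.
Proof.
elim: d p => [|d IH] p hs.
- have hq := decomp_size p 0 hs.
  have -> : p = (p - p`_0 *: 'X^0) + p`_0 *: 'X^0 by rewrite subrK.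
  move: hq; rewrite leqn0 size_poly_eq0 => /eqP ->.
  rewrite add0r Dl_scale /Dl comp_Xn_poly !expr0 subrr scaler0 size_poly0 coef0 mul0r.
  by split.
- have hq := decomp_size p d.+1 hs.
  set q := p - p`_d.+1 *: 'X^(d.+1) in hq.
  have -> : p = q + p`_d.+1 *: 'X^(d.+1) by rewrite /q subrK.
  have [Ms Mc] := Mlem d.+1.
  have [Qs _] := IH q hq.
  rewrite Dl_add Dl_scale /Dl comp_Xn_poly -/(Dl q).
  split.
  + apply/leq_sizeP => j hj.
    rewrite coefD coefZ (leq_sizeP _ _ Qs) ?(leq_trans _ hj) //.
    by rewrite (leq_sizeP _ _ Ms) // mulr0 addr0.
  + rewrite coefD coefZ /= (leq_sizeP _ _ Qs) // add0r Mc.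
    rewrite coefD coefZ coefXn eqxx mulr1 (leq_sizeP _ _ hq) // add0r.
    by rewrite mulrC.
Qed.

Arguments Dlem {d p}.
Lemma prodtop (U V : RP) a b : leq (size U) a.+1 -> leq (size V) b.+1 ->
  leq (size (U * V)) (a + b).+1 /\ (U * V)`_(a + b) = U`_a * V`_b.
Proof.
move=> hU hV; split.
  have := size_polyMleq U V. lia.
have ha : (a < (a + b).+1)%N by rewrite ltnS leq_addr.
rewrite coefM (bigD1 (Ordinal ha)) //= addKn big1 ?addr0 //.
move=> [j hj] /= hne.
have hne' : j != a by apply: contra hne => /eqP hja; apply/eqP; apply: val_inj.
case: (ltngtP j a) => hja.
- rewrite (leq_sizeP _ _ hV) ?mulr0 //.
  clear hne hne'; move: hj; rewrite ltnS => hj; lia.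
- by rewrite (leq_sizeP _ _ hU) ?mul0r.
- by move: hne'; rewrite hja eqxx.
Qed.

Arguments prodtop {U V a b}.
Definition ev (p : RP) (x : R) : R := p.[x].
Definition cf (p : RP) (i : nat) : R := p`_i.
Definition sz (p : RP) : nat := size p.
Definition Q1 (p : RP) : RP := p + Dl p.
Definition LQ (p : RP) : RP := Dl p ^+ 2 - p * Dl (Dl p).
Definition BB (p : RP) : RP := Q1 p ^+ 2.
Definition WW (p : RP) (d : nat) : RP := 'X * ('X * LQ p) - d%:R *: BB p.
Fixpoint rem (p : RP) (d t : nat) : RP :=
  match t with
  | O => - WW p d
  | S t => 'X * rem p d t - ((rem p d t)`_(2 * d).-1 / (BB p)`_(2 * d)) *: BB p
  end.

Lemma Q1_ev (p : RP) x : (Q1 p).[x] = p.[x + 1].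
Proof. by rewrite /Q1 /Dl addrC subrK horner_comp hornerD hornerX hornerC. Qed.

Lemma Q1_sz (p : RP) d : leq (size p) d.+1 -> leq (size (Q1 p)) d.+1 /\ (Q1 p)`_d = p`_d.
Proof.
move=> hs; have [h1 _] := Dlem hs.
split.
- apply/leq_sizeP => j hj; rewrite coefD (leq_sizeP _ _ hs) // (leq_sizeP _ _ h1) ?addr0 //.
  exact: ltnW.
- by rewrite coefD (leq_sizeP _ _ h1) // addr0.
Qed.
Arguments Q1_sz {p d}.

Lemma LQ_ev (p : RP) x : (LQ p).[x] = p.[x + 1] ^+ 2 - p.[x] * p.[x + 1 + 1].
Proof.
rewrite /LQ hornerD hornerN hornerM !hornerE /Dl.
rewrite !(hornerD, hornerN, horner_comp, hornerX, hornerC).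
ring.
Qed.

Lemma LQ_sz (p : RP) d : (2 <= d)%N -> leq (size p) d.+1 ->
  leq (size (LQ p)) (2 * d - 2).+1 /\ (LQ p)`_(2 * d - 2) = d%:R * p`_d ^+ 2.
Proof.
case: d => [|[|e]] // _ hs.
have [h1 c1] := Dlem hs.
have [h2 c2] := Dlem h1.
rewrite /= in c1 c2.
have [s3 c3] := prodtop h1 h1.
have [s4 c4] := prodtop hs h2.
have E1 : (2 * e.+2 - 2 = e.+1 + e.+1)%N by lia.
have E2 : (e.+1 + e.+1 = e.+2 + e)%N by lia.
rewrite E1 /LQ expr2; split.
- apply/leq_sizeP => j hj; rewrite coefB (leq_sizeP _ _ s3) // (leq_sizeP _ _ s4) ?subrr //.
  by rewrite -E2.
- rewrite coefB c3 E2 c4 c2 !c1.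
  rewrite -(natr1 e.+1). ring.
Qed.
Arguments LQ_sz {p d}.

Lemma BB_ev (p : RP) x : (BB p).[x] = p.[x + 1] ^+ 2.
Proof. by rewrite /BB hornerE Q1_ev. Qed.

Lemma BB_sz (p : RP) d : leq (size p) d.+1 ->
  leq (size (BB p)) (2 * d).+1 /\ (BB p)`_(2 * d) = p`_d ^+ 2.
Proof.
move=> hs; have [s1 c1] := Q1_sz hs.
have [s2 c2] := prodtop s1 s1.
by rewrite /BB expr2 mul2n -addnn c2 c1 s2.
Qed.
Arguments BB_sz {p d}.

Lemma WW_sz (p : RP) d : (2 <= d)%N -> leq (size p) d.+1 -> leq (size (WW p d)) (2 * d).
Proof.
move=> hd hs.
have [ls lc] := LQ_sz hd hs.
have [bs bc] := BB_sz hs.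
apply/leq_sizeP => j hj; rewrite /WW coefB coefZ !coefXM.
case: (ltngtP j (2 * d)) => hj2.
- by move: hj; rewrite leqNgt hj2.
- have -> : (j == 0%N) = false by apply/negbTE; rewrite -lt0n; apply: leq_ltn_trans hj2.
  have -> : (j.-1 == 0%N) = false.
    apply/negbTE; rewrite -lt0n. move: hj2 hd; clear; lia.
  rewrite (leq_sizeP _ _ ls); last by move: hj2 hd; clear; lia.
  by rewrite (leq_sizeP _ _ bs) // mulr0 subrr.
- rewrite hj2.
  have -> : ((2 * d)%N == 0%N) = false by apply/negbTE; move: hd; clear; lia.
  have -> : ((2 * d).-1 == 0%N) = false by apply/negbTE; move: hd; clear; lia.
  have -> : ((2 * d).-1.-1 = 2 * d - 2)%N by move: hd; clear; lia.
  by rewrite lc bc subrr.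
Qed.
Arguments WW_sz {p d}.

Lemma rem_sz (p : RP) d t : (2 <= d)%N -> leq (size p) d.+1 -> p`_d != 0 ->
  leq (size (rem p d t)) (2 * d).
Proof.
move=> hd hs hc.
have [bs bc] := BB_sz hs.
have bn : (BB p)`_(2 * d) != 0 by rewrite bc expf_neq0.
elim: t => [|t IH] /=.
- by rewrite size_polyN WW_sz.
- apply/leq_sizeP => j hj; rewrite coefB coefZ !coefXM.
  case: (ltngtP j (2 * d)) => hj2.
  + by move: hj; rewrite leqNgt hj2.
  + have -> : (j == 0%N) = false by apply/negbTE; rewrite -lt0n; apply: leq_ltn_trans hj2.
    rewrite (leq_sizeP _ _ IH j.-1); last by move: hj2; clear; lia.
    by rewrite (leq_sizeP _ _ bs j) // mulr0 subrr.
  + rewrite hj2.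
    have -> : ((2 * d)%N == 0%N) = false by apply/negbTE; move: hd; clear; lia.
    by rewrite divfK // subrr.
Qed.

Definition polyL (a : nat -> R) (s : seq nat) : RP := foldr (fun k q => a k *: 'X^k + q) 0 s.

Lemma polyL_ev a s x : (polyL a s).[x] = List.fold_right Rplus R0 (List.map (fun k => Rmult (a k) (pow x k)) s).
Proof.
elim: s => [|k s IH] /=; first by rewrite horner0.
by rewrite hornerD hornerZ hornerXn IH RpowE.
Qed.

Lemma polyL_app a s1 s2 : polyL a (s1 ++ s2) = polyL a s1 + polyL a s2.
Proof. elim: s1 => [|k s IH] /=; first by rewrite add0r. by rewrite IH addrA. Qed.

Lemma polyL_sz a s l : (forall k, List.In k s -> (k < l)%N) -> leq (size (polyL a s)) l.
Proof.
elim: s => [|k s IH] /= hk; first by rewrite size_poly0.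
apply/leq_sizeP => j hj; rewrite coefD coefZ coefXn.
have hkl := hk k (or_introl erefl).
rewrite (leq_sizeP _ _ (IH (fun k' h => hk k' (or_intror h))) j) //.
have -> : (j == k) = false by apply/negbTE; move: hkl hj; clear; lia.
by rewrite mulr0 addr0.
Qed.

Lemma polyL_top a s l : (forall k, List.In k s -> (k < l)%N) ->
  leq (size (polyL a (s ++ [:: l]))) l.+1 /\ (polyL a (s ++ [:: l]))`_l = a l.
Proof.
move=> hk; have hs := polyL_sz a s l hk.
rewrite polyL_app /= addr0; split.
- apply/leq_sizeP => j hj; rewrite coefD coefZ coefXn (leq_sizeP _ _ hs) ?(ltnW hj) //.
  by rewrite (gtn_eqF hj) mulr0 addr0.
- by rewrite coefD coefZ coefXn eqxx mulr1 (leq_sizeP _ _ hs) // add0r.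
Qed.

Lemma decomp_S (p : RP) d : (sz p <= S d)%coq_nat ->
  exists q, (sz q <= d)%coq_nat /\ forall x, ev p x = cf p d * pow x d + ev q x.
Proof.
move/leP=> hs; exists (p - p`_d *: 'X^d); split; first by apply/leP; exact: decomp_size.
move=> x; rewrite /ev /cf hornerD hornerN hornerZ hornerXn RpowE. ring.
Qed.

Lemma sz0_S (p : RP) : sz p = 0%N -> forall x, ev p x = 0.
Proof. by move=> /eqP; rewrite /sz size_poly_eq0 => /eqP -> x; rewrite /ev horner0. Qed.

Lemma Q1_S (p : RP) x : ev (Q1 p) x = ev p (x + 1).
Proof. exact: Q1_ev. Qed.

Lemma Q1sz_S (p : RP) d : (sz p <= S d)%coq_nat -> (sz (Q1 p) <= S d)%coq_nat /\ cf (Q1 p) d = cf p d.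
Proof. move/leP=> hs; have [h1 h2] := Q1_sz hs; split => //; exact/leP. Qed.

Lemma LQ_S (p : RP) x : ev (LQ p) x = pow (ev p (x + 1)) 2 - ev p x * ev p (x + 1 + 1).
Proof. by rewrite /ev LQ_ev RpowE. Qed.

Lemma LQsz_S (p : RP) d : (2 <= d)%coq_nat -> (sz p <= S d)%coq_nat ->
  (sz (LQ p) <= S (2 * d - 2))%coq_nat /\ cf (LQ p) (2 * d - 2) = INR d * pow (cf p d) 2.
Proof.
move=> /leP hd /leP hs; have [h1 h2] := LQ_sz hd hs; split; first exact/leP.
by rewrite /cf h2 INRE RpowE.
Qed.

Lemma BB_S (p : RP) x : ev (BB p) x = pow (ev p (x + 1)) 2.
Proof. by rewrite /ev BB_ev RpowE. Qed.

Lemma BBsz_S (p : RP) d : (sz p <= S d)%coq_nat ->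
  (sz (BB p) <= S (2 * d))%coq_nat /\ cf (BB p) (2 * d) = pow (cf p d) 2.
Proof.
move=> /leP hs; have [h1 h2] := BB_sz hs; split; first exact/leP.
by rewrite /cf h2 RpowE.
Qed.

Lemma rem0_S (p : RP) d x : ev (rem p d 0) x = - (x * (x * ev (LQ p) x) - INR d * ev (BB p) x).
Proof. by rewrite /ev /= /WW hornerN hornerD hornerN !hornerM hornerZ hornerX INRE /BB expr2 hornerM.
Qed.

Lemma remS_S (p : RP) d t x : ev (rem p d (S t)) x =
  x * ev (rem p d t) x - (cf (rem p d t) (Nat.pred (2 * d)) / cf (BB p) (2 * d)) * ev (BB p) x.
Proof. by rewrite /ev /= hornerD hornerN hornerM hornerZ hornerX. Qed.

Lemma remsz_S (p : RP) d t : (2 <= d)%coq_nat -> (sz p <= S d)%coq_nat -> cf p d <> 0 ->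
  (sz (rem p d t) <= 2 * d)%coq_nat.
Proof. move=> /leP hd /leP hs /eqP hc; apply/leP; exact: rem_sz. Qed.

Lemma polyL_S a s x : ev (polyL a s) x = List.fold_right Rplus R0 (List.map (fun k => Rmult (a k) (pow x k)) s).
Proof. exact: polyL_ev. Qed.

Lemma polyLtop_S a s l : (forall k, List.In k s -> (k < l)%coq_nat) ->
  (sz (polyL a (s ++ l :: nil)) <= S l)%coq_nat /\ cf (polyL a (s ++ l :: nil)) l = a l.
Proof.
move=> hk; have [h1 h2] := polyL_top a s l (fun k h => introT ltP (hk k h)); split => //; exact/leP.
Qed.
End P.

Open Scope R_scope.

Lemma arch (A : R) : exists N : nat, A <= INR N.
Proof. destruct (INR_archimed 1 A) as [n Hn]; [lra|]. exists n; lra. Qed.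

Lemma decomp p d : (P.sz p <= S d)%nat ->
  exists q, (P.sz q <= d)%nat /\ forall x, P.ev p x = P.cf p d * x ^ d + P.ev q x.
Proof. exact (P.decomp_S p d). Qed.

Lemma sz0 p : P.sz p = 0%nat -> forall x, P.ev p x = 0.
Proof. exact (P.sz0_S p). Qed.

Lemma Q1e p x : P.ev (P.Q1 p) x = P.ev p (x + 1).
Proof. exact (P.Q1_S p x). Qed.

Lemma Q1sz p d : (P.sz p <= S d)%nat -> (P.sz (P.Q1 p) <= S d)%nat /\ P.cf (P.Q1 p) d = P.cf p d.
Proof. exact (P.Q1sz_S p d). Qed.

Lemma LQe p x : P.ev (P.LQ p) x = P.ev p (x + 1) ^ 2 - P.ev p x * P.ev p (x + 1 + 1).
Proof. exact (P.LQ_S p x). Qed.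

Lemma LQsz p d : (2 <= d)%nat -> (P.sz p <= S d)%nat ->
  (P.sz (P.LQ p) <= S (2 * d - 2))%nat /\ P.cf (P.LQ p) (2 * d - 2) = INR d * P.cf p d ^ 2.
Proof. exact (P.LQsz_S p d). Qed.

Lemma BBe p x : P.ev (P.BB p) x = P.ev p (x + 1) ^ 2.
Proof. exact (P.BB_S p x). Qed.

Lemma BBsz p d : (P.sz p <= S d)%nat ->
  (P.sz (P.BB p) <= S (2 * d))%nat /\ P.cf (P.BB p) (2 * d) = P.cf p d ^ 2.
Proof. exact (P.BBsz_S p d). Qed.

Lemma rem0 p d x : P.ev (P.rem p d 0) x = - (x * (x * P.ev (P.LQ p) x) - INR d * P.ev (P.BB p) x).
Proof. exact (P.rem0_S p d x). Qed.

Lemma remS p d t x : P.ev (P.rem p d (S t)) x =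
  x * P.ev (P.rem p d t) x - (P.cf (P.rem p d t) (Nat.pred (2 * d)) / P.cf (P.BB p) (2 * d)) * P.ev (P.BB p) x.
Proof. exact (P.remS_S p d t x). Qed.

Lemma remsz p d t : (2 <= d)%nat -> (P.sz p <= S d)%nat -> P.cf p d <> 0 ->
  (P.sz (P.rem p d t) <= 2 * d)%nat.
Proof. exact (P.remsz_S p d t). Qed.

Lemma polyLe a s x : P.ev (P.polyL a s) x = fold_right Rplus 0 (map (fun k => a k * x ^ k) s).
Proof. exact (P.polyL_S a s x). Qed.

Lemma polyLtop a s l : (forall k, In k s -> (k < l)%nat) ->
  (P.sz (P.polyL a (s ++ l :: nil)) <= S l)%nat /\ P.cf (P.polyL a (s ++ l :: nil)) l = a l.
Proof. exact (P.polyLtop_S a s l). Qed.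

Lemma poly_bound : forall d p, (P.sz p <= S d)%nat ->
  exists K, 0 <= K /\ forall x, 1 <= x -> Rabs (P.ev p x) <= K * x ^ d.
Proof.
induction d as [|d IH]; intros p Hp.
- destruct (decomp p 0 Hp) as [q [Hq Hev]].
  assert (Hq0 : P.sz q = 0%nat) by lia.
  exists (Rabs (P.cf p 0)); split; [apply Rabs_pos|].
  intros x Hx. rewrite Hev, (sz0 q Hq0). simpl. rewrite Rmult_1_r, Rplus_0_r. lra.
- destruct (decomp p (S d) Hp) as [q [Hq Hev]].
  destruct (IH q Hq) as [K [HK HKb]].
  exists (Rabs (P.cf p (S d)) + K); split; [pose proof (Rabs_pos (P.cf p (S d))); lra|].
  intros x Hx. rewrite Hev. specialize (HKb x Hx).
  assert (Hxd : 0 <= x ^ d) by (apply pow_le; lra).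
  assert (H1 : K * x ^ d <= K * x ^ S d).
  { simpl. apply Rmult_le_compat_l; [lra|]. nra. }
  eapply Rle_trans; [apply Rabs_triang|].
  rewrite Rabs_mult, (Rabs_pos_eq (x ^ S d)) by (apply pow_le; lra).
  lra.
Qed.

Lemma poly_lower D p : (P.sz p <= S D)%nat -> P.cf p D <> 0 ->
  exists N, (1 <= N)%nat /\ forall n, (N <= n)%nat ->
    Rabs (P.cf p D) / 2 * INR n ^ D <= Rabs (P.ev p (INR n)).
Proof.
intros Hp Hc.
pose proof (Rabs_pos_lt _ Hc) as Hca.
destruct (decomp p D Hp) as [q [Hq Hev]].
destruct D as [|D].
- exists 1%nat; split; [lia|]. intros n Hn.
  rewrite Hev, (sz0 q ltac:(lia)). simpl. rewrite !Rmult_1_r, !Rplus_0_r. lra.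
- destruct (poly_bound D q Hq) as [K [HK HKb]].
  destruct (arch (2 * K / Rabs (P.cf p (S D)) + 1)) as [N HN].
  exists (Nat.max N 1); split; [lia|]. intros n Hn.
  set (x := INR n).
  assert (HxN : INR N <= x) by (apply le_INR; lia).
  assert (Hx1 : 1 <= x) by (replace 1 with (INR 1) by reflexivity; apply le_INR; lia).
  specialize (HKb x Hx1).
  assert (Hxd : 0 <= x ^ D) by (apply pow_le; lra).
  assert (HK2 : 2 * K <= Rabs (P.cf p (S D)) * x).
  { assert (2 * K / Rabs (P.cf p (S D)) <= x) by lra.
    apply (Rmult_le_compat_l (Rabs (P.cf p (S D)))) in H; [|lra].
    field_simplify in H; lra. }
  assert (Hm : Rabs (P.cf p (S D) * x ^ S D) <= Rabs (P.ev p x) + Rabs (P.ev q x)).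
  { replace (P.cf p (S D) * x ^ S D) with (P.ev p x + - P.ev q x) by (rewrite Hev; ring).
    eapply Rle_trans; [apply Rabs_triang|]. rewrite Rabs_Ropp. lra. }
  rewrite Rabs_mult, (Rabs_pos_eq (x ^ S D)) in Hm by (apply pow_le; lra).
  simpl in *. nra.
Qed.

Definition bigO (u : nat -> R) (k : nat) : Prop :=
  exists K N, 0 <= K /\ forall n, (N <= n)%nat -> Rabs (u n) <= K * INR n ^ k.

Lemma INR_pow_pos n k : 0 <= INR n ^ k.
Proof. apply pow_le, pos_INR. Qed.

Lemma lo_ext e1 e2 k : (forall n, e1 n = e2 n) -> little_o_pow e1 k -> little_o_pow e2 k.
Proof.
intros He H eps Heps. destruct (H eps Heps) as [N HN]. exists N. intros n Hn.
rewrite <- He. auto.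
Qed.

Lemma lo_add e1 e2 k : little_o_pow e1 k -> little_o_pow e2 k -> little_o_pow (fun n => e1 n + e2 n) k.
Proof.
intros H1 H2 eps Heps.
destruct (H1 (eps/2) ltac:(lra)) as [N1 HN1]. destruct (H2 (eps/2) ltac:(lra)) as [N2 HN2].
exists (Nat.max N1 N2). intros n Hn.
specialize (HN1 n ltac:(lia)). specialize (HN2 n ltac:(lia)).
eapply Rle_trans; [apply Rabs_triang|]. lra.
Qed.

Lemma lo_opp e k : little_o_pow e k -> little_o_pow (fun n => - e n) k.
Proof.
intros H eps Heps. destruct (H eps Heps) as [N HN]. exists N. intros n Hn.
rewrite Rabs_Ropp. auto.
Qed.

Lemma lo_mul e u a b : little_o_pow e a -> bigO u b -> little_o_pow (fun n => u n * e n) (b + a).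
Proof.
intros He [K [N0 [HK Hu]]] eps Heps.
destruct (He (eps / (K + 1)) ltac:(apply Rdiv_lt_0_compat; lra)) as [N1 HN1].
exists (Nat.max N0 N1). intros n Hn.
specialize (Hu n ltac:(lia)). specialize (HN1 n ltac:(lia)).
rewrite Rabs_mult, pow_add.
pose proof (INR_pow_pos n a). pose proof (INR_pow_pos n b).
pose proof (Rabs_pos (u n)). pose proof (Rabs_pos (e n)).
assert (Hq : K * (eps / (K + 1)) <= eps).
{ unfold Rdiv. rewrite <- Rmult_assoc. apply (Rmult_le_reg_r (K + 1)); [lra|].
  rewrite Rmult_assoc, Rinv_l by lra. nra. }
assert (Hq0 : 0 <= eps / (K + 1)) by (apply Rlt_le, Rdiv_lt_0_compat; lra).
apply Rle_trans with ((K * INR n ^ b) * (eps / (K + 1) * INR n ^ a)).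
- apply Rmult_le_compat; auto.
- replace ((K * INR n ^ b) * (eps / (K + 1) * INR n ^ a)) with ((K * (eps / (K + 1))) * (INR n ^ b * INR n ^ a)) by ring.
  apply Rmult_le_compat_r; [apply Rmult_le_pos; auto | auto].
Qed.

Lemma lo_O e k : little_o_pow e k -> bigO e k.
Proof.
intros H. destruct (H 1 ltac:(lra)) as [N HN]. exists 1, N. split; [lra|]. auto.
Qed.

Lemma pow_mono_INR n a b : (1 <= n)%nat -> (a <= b)%nat -> INR n ^ a <= INR n ^ b.
Proof.
intros Hn Hab. apply Rle_pow; auto. replace 1 with (INR 1) by reflexivity. apply le_INR; lia.
Qed.

Lemma O_mono u a b : bigO u a -> (a <= b)%nat -> bigO u b.
Proof.
intros [K [N [HK H]]] Hab. exists K, (Nat.max N 1). split; auto. intros n Hn.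
eapply Rle_trans; [apply H; lia|]. apply Rmult_le_compat_l; auto. apply pow_mono_INR; lia.
Qed.

Lemma lo_mono e a b : little_o_pow e a -> (a <= b)%nat -> little_o_pow e b.
Proof.
intros H Hab eps Heps. destruct (H eps Heps) as [N HN]. exists (Nat.max N 1). intros n Hn.
eapply Rle_trans; [apply HN; lia|]. apply Rmult_le_compat_l; [lra|]. apply pow_mono_INR; lia.
Qed.

Lemma O_mul u v a b : bigO u a -> bigO v b -> bigO (fun n => u n * v n) (a + b).
Proof.
intros [K1 [N1 [HK1 H1]]] [K2 [N2 [HK2 H2]]]. exists (K1 * K2), (Nat.max N1 N2).
split; [nra|]. intros n Hn. rewrite Rabs_mult, pow_add.
specialize (H1 n ltac:(lia)). specialize (H2 n ltac:(lia)).
apply Rle_trans with ((K1 * INR n ^ a) * (K2 * INR n ^ b)).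
- apply Rmult_le_compat; auto using Rabs_pos.
- right; ring.
Qed.

Lemma lo_shift e k : little_o_pow e k -> little_o_pow (fun n => e (S n)) k.
Proof.
intros H eps Heps.
assert (H2k : 0 < 2 ^ k) by (apply pow_lt; lra).
destruct (H (eps / 2 ^ k) ltac:(apply Rdiv_lt_0_compat; lra)) as [N HN].
exists (Nat.max N 1). intros n Hn.
eapply Rle_trans; [apply HN; lia|].
assert (Hx : INR (S n) <= 2 * INR n).
{ rewrite S_INR. assert (1 <= INR n) by (replace 1 with (INR 1) by reflexivity; apply le_INR; lia). lra. }
apply Rle_trans with (eps / 2 ^ k * (2 * INR n) ^ k).
- apply Rmult_le_compat_l; [apply Rlt_le, Rdiv_lt_0_compat; lra|].
  apply pow_incr. split; [apply pos_INR|auto].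
- rewrite Rpow_mult_distr. right. field. lra.
Qed.

Lemma poly_O p d : (P.sz p <= S d)%nat -> bigO (fun n => P.ev p (INR n)) d.
Proof.
intros Hp. destruct (poly_bound d p Hp) as [K [HK H]]. exists K, 1%nat. split; auto.
intros n Hn. apply H. replace 1 with (INR 1) by reflexivity. apply le_INR; lia.
Qed.

Lemma poly_O1 p d : (P.sz p <= S d)%nat -> bigO (fun n => P.ev p (INR (S n))) d.
Proof.
intros Hp. destruct (Q1sz p d Hp) as [H1 _].
destruct (poly_O _ _ H1) as [K [N [HK H]]]. exists K, N. split; auto.
intros n Hn. rewrite S_INR, <- Q1e. auto.
Qed.

Lemma poly_O2 p d : (P.sz p <= S d)%nat -> bigO (fun n => P.ev p (INR (S (S n)))) d.
Proof.
intros Hp. destruct (Q1sz p d Hp) as [H1 _]. destruct (Q1sz _ d H1) as [H2 _].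
destruct (poly_O _ _ H2) as [K [N [HK H]]]. exists K, N. split; auto.
intros n Hn. rewrite !S_INR, <- !Q1e. auto.
Qed.

Lemma fold_plus l a : fold_right Rplus a l = fold_right Rplus 0 l + a.
Proof. induction l as [|x l IH]; simpl; [ring|rewrite IH; ring]. Qed.

Lemma sum_range_S m n F : (m <= S n)%nat -> sum_range m (S n) F = sum_range m n F + F (S n).
Proof.
intros H. unfold sum_range.
replace (S (S n) - m)%nat with (S (S n - m)) by lia.
rewrite seq_S. replace (m + (S n - m))%nat with (S n) by lia.
rewrite map_app, fold_right_app. cbn [map fold_right].
rewrite (fold_plus _ (F (S n) + 0)). ring.
Qed.

Lemma Lstep g p d k e : (2 <= d)%nat -> (k <= d)%nat -> (P.sz p <= S d)%nat ->
  (forall n, g n = P.ev p (INR n) + e n) -> little_o_pow e k ->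
  little_o_pow (fun n => Lhat g n - P.ev (P.LQ p) (INR n)) (k + d).
Proof.
intros Hd Hkd Hp Hg He.
pose proof (poly_O p d Hp) as O0. pose proof (poly_O1 p d Hp) as O1. pose proof (poly_O2 p d Hp) as O2.
pose proof (lo_shift e k He) as He1.
pose proof (lo_shift _ k He1) as He2. simpl in He2.
assert (Oe0 : bigO e d) by (eapply O_mono; [apply lo_O; exact He|exact Hkd]).
assert (Oe1 : bigO (fun n => e (S n)) d) by (eapply O_mono; [apply lo_O; exact He1|exact Hkd]).
pose proof (lo_mul _ _ _ _ He1 O1) as T1.
pose proof (lo_mul _ _ _ _ He1 Oe1) as T3.
pose proof (lo_mul _ _ _ _ He2 O0) as T4.
pose proof (lo_mul _ _ _ _ He O2) as T5.
pose proof (lo_mul _ _ _ _ He2 Oe0) as T6.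
replace (k + d)%nat with (d + k)%nat by lia.
eapply lo_ext; [|apply lo_add; [apply lo_add; [apply lo_add; [exact T1|exact T1]|exact T3]| apply lo_opp; apply lo_add; [apply lo_add; [exact T4|exact T5]|exact T6]]].
intros n; cbv beta. unfold Lhat. rewrite !Hg, LQe, <- !S_INR. ring.
Qed.

Lemma iter_inv l r a f : (1 <= r)%nat -> (2 * r <= l)%nat -> a l <> 0 ->
  little_o_pow (fun n => f n - sum_range (l - 2 * r) l (fun k => a k * INR n ^ k)) (l - 2 * r) ->
  forall i, (i < r)%nat -> exists p d k, (2 <= d)%nat /\ (k + 2 * (r - i) = d)%nat /\
    (P.sz p <= S d)%nat /\ P.cf p d <> 0 /\ INR d = 2 ^ i * INR l - 2 ^ (S i) + 2 /\
    little_o_pow (fun n => Lhat_iter i f n - P.ev p (INR n)) k.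
Proof.
intros Hr Hl Ha Hf. induction i as [|i IH]; intros Hi.
- assert (Hs : forall k, In k (seq (l - 2 * r) (2 * r)) -> (k < l)%nat)
    by (intros k Hk; apply in_seq in Hk; lia).
  destruct (polyLtop a _ l Hs) as [Hsz Hcf].
  exists (P.polyL a (seq (l - 2 * r) (2 * r) ++ l :: nil)), l, (l - 2 * r)%nat.
  split; [lia|]. split; [lia|]. split; [exact Hsz|]. split; [rewrite Hcf; exact Ha|].
  split; [simpl; ring|].
  eapply lo_ext; [|exact Hf]. intros n. unfold Lhat_iter. simpl Nat.iter.
  unfold sum_range. rewrite polyLe.
  replace (S l - (l - 2 * r))%nat with (S (2 * r)) by lia.
  rewrite seq_S. replace (l - 2 * r + 2 * r)%nat with l by lia. reflexivity.
- destruct (IH ltac:(lia)) as [p [d [k [Hd [Hkd [Hp [Hc [Hdl He]]]]]]]].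
  destruct (LQsz p d Hd Hp) as [HLs HLc].
  exists (P.LQ p), (2 * d - 2)%nat, (k + d)%nat.
  split; [lia|]. split; [lia|]. split; [exact HLs|]. split.
  { rewrite HLc. apply Rmult_integral_contrapositive_currified;
      [apply not_0_INR; lia| apply pow_nonzero; auto]. }
  split.
  { rewrite minus_INR by lia. rewrite mult_INR, Hdl. simpl. ring. }
  assert (Hg : forall n, Lhat_iter i f n = P.ev p (INR n) + (Lhat_iter i f n - P.ev p (INR n)))
    by (intros; ring).
  exact (Lstep _ p d k _ Hd ltac:(lia) Hp Hg He).
Qed.

Definition zc p d (i : nat) := P.cf (P.rem p d (i - 3)) (Nat.pred (2 * d)) / P.cf (P.BB p) (2 * d).

Lemma expand p d x t : x <> 0 -> P.ev (P.BB p) x <> 0 ->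
  (P.ev (P.BB p) x - P.ev (P.LQ p) x) / P.ev (P.BB p) x =
  1 + - INR d / x ^ 2 + sum_range 3 (t + 2) (fun i => zc p d i / x ^ i)
    + P.ev (P.rem p d t) x / (x ^ (t + 2) * P.ev (P.BB p) x).
Proof.
intros Hx HB. induction t as [|t IH].
- simpl (0 + 2)%nat. replace (sum_range 3 2 _) with 0 by reflexivity. rewrite rem0. field. split; auto.
- replace (S t + 2)%nat with (S (t + 2)) by lia. rewrite sum_range_S by lia. rewrite IH.
  assert (Hz : zc p d (S (t + 2)) = P.cf (P.rem p d t) (Nat.pred (2 * d)) / P.cf (P.BB p) (2 * d))
    by (unfold zc; replace (S (t + 2) - 3)%nat with t by lia; reflexivity).
  rewrite Hz, remS.
  set (zeta := P.cf (P.rem p d t) (Nat.pred (2 * d)) / P.cf (P.BB p) (2 * d)).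
  rewrite <- (tech_pow_Rmult x (t + 2)).
  assert (x ^ (t + 2) <> 0) by (apply pow_nonzero; auto).
  field. repeat split; auto.
Qed.

Lemma div_bound a b M L : 0 < L -> L <= Rabs b -> Rabs a <= M -> Rabs (a / b) <= M / L.
Proof.
intros HL Hb Ha. assert (b <> 0) by (intro; subst; rewrite Rabs_R0 in *; lra).
unfold Rdiv. rewrite Rabs_mult, Rabs_inv.
apply Rmult_le_compat; [apply Rabs_pos| left; apply Rinv_0_lt_compat, Rabs_pos_lt; auto | auto |].
apply Rinv_le_contravar; auto.
Qed.

Lemma Rstep g p d k m e : (2 <= d)%nat -> (2 <= m)%nat -> (k + m = d)%nat ->
  (P.sz p <= S d)%nat -> P.cf p d <> 0 ->
  (forall n, g n = P.ev p (INR n) + e n) -> little_o_pow e k ->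
  exists z, little_o_invpow
    (fun n => R2 g n - (1 + - INR d / INR n ^ 2 + sum_range 3 m (fun i => z i / INR n ^ i))) m.
Proof.
intros Hd Hm Hkm Hp Hc Hg He.
exists (zc p d).
destruct (BBsz p d Hp) as [HBs HBc].
assert (HBc0 : P.cf (P.BB p) (2 * d) <> 0) by (rewrite HBc; apply pow_nonzero; auto).
destruct (poly_lower _ _ HBs HBc0) as [NB [HNB1 HNB]].
set (beta := Rabs (P.cf (P.BB p) (2 * d)) / 2).
assert (Hbeta : 0 < beta) by (unfold beta; pose proof (Rabs_pos_lt _ HBc0); lra).
assert (Hrs : (P.sz (P.rem p d (m - 2)) <= S (2 * d - 1))%nat)
  by (pose proof (remsz p d (m - 2) Hd Hp Hc); lia).
destruct (poly_bound _ _ Hrs) as [Kr [HKr HKrb]].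
destruct (O_mul _ _ _ _ (poly_O p d Hp) (poly_O2 p d Hp)) as [KA [NA [HKA HA]]].
destruct (poly_O _ _ HBs) as [KB [NB' [HKB HBb]]].
pose proof (poly_O p d Hp) as O0. pose proof (poly_O1 p d Hp) as O1. pose proof (poly_O2 p d Hp) as O2.
pose proof (lo_shift e k He) as He1.
pose proof (lo_shift _ k He1) as He2. simpl in He2.
assert (Hkd : (k <= d)%nat) by lia.
assert (Oe0 : bigO e d) by (eapply O_mono; [apply lo_O; exact He|exact Hkd]).
assert (Oe1 : bigO (fun n => e (S n)) d) by (eapply O_mono; [apply lo_O; exact He1|exact Hkd]).
pose proof (lo_mul _ _ _ _ He1 O1) as T1.
pose proof (lo_mul _ _ _ _ He1 Oe1) as T3.
pose proof (lo_mul _ _ _ _ He2 O0) as T4.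
pose proof (lo_mul _ _ _ _ He O2) as T5.
pose proof (lo_mul _ _ _ _ He2 Oe0) as T6.
set (E1 := fun n => g n * g (S (S n)) - P.ev p (INR n) * P.ev p (INR (S (S n)))).
set (E2 := fun n => g (S n) ^ 2 - P.ev p (INR (S n)) ^ 2).
assert (HE1 : little_o_pow E1 (d + k)).
{ eapply lo_ext; [|apply lo_add; [apply lo_add; [exact T4|exact T5]|exact T6]].
  intros n; cbv beta. unfold E1. rewrite !Hg. ring. }
assert (HE2 : little_o_pow E2 (d + k)).
{ eapply lo_ext; [|apply lo_add; [apply lo_add; [exact T1|exact T1]|exact T3]].
  intros n; cbv beta. unfold E2. rewrite !Hg. ring. }
intros eps Heps.
set (M := KA + KB + 1).
assert (HM : 0 < M) by (unfold M; lra).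
set (delta := Rmin (beta / 2) (eps * beta ^ 2 / (4 * M))).
assert (Hdelta : 0 < delta).
{ unfold delta. apply Rmin_pos; [lra|]. apply Rdiv_lt_0_compat; [|lra].
  apply Rmult_lt_0_compat; [lra|]. apply pow_lt; lra. }
assert (Hdelta1 : delta <= beta / 2) by apply Rmin_l.
assert (Hdelta2 : delta <= eps * beta ^ 2 / (4 * M)) by apply Rmin_r.
destruct (HE1 delta Hdelta) as [N1 HN1]. destruct (HE2 delta Hdelta) as [N2 HN2].
destruct (arch (2 * Kr / (beta * eps))) as [Na HNa].
exists (Nat.max NB (Nat.max N1 (Nat.max N2 (Nat.max NA (Nat.max NB' (Nat.max Na 1)))))).
intros n Hn.
specialize (HNB n ltac:(lia)). specialize (HN1 n ltac:(lia)). specialize (HN2 n ltac:(lia)).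
specialize (HA n ltac:(lia)). specialize (HBb n ltac:(lia)).
assert (Hx1 : 1 <= INR n) by (replace 1 with (INR 1) by reflexivity; apply le_INR; lia).
assert (HxNa : INR Na <= INR n) by (apply le_INR; lia).
specialize (HKrb (INR n) Hx1).
set (x := INR n) in *.
assert (Hx0 : x <> 0) by lra.
set (X := x ^ (2 * d)) in *.
set (Y := x ^ (d + k)) in *.
set (xm := x ^ m).
assert (HXY : X = Y * xm) by (unfold X, Y, xm; rewrite <- pow_add; f_equal; lia).
assert (Hxm : 0 < xm) by (unfold xm; apply pow_lt; lra).
assert (HY : 0 < Y) by (unfold Y; apply pow_lt; lra).
assert (HX : 0 < X) by (rewrite HXY; apply Rmult_lt_0_compat; auto).
assert (HYX : Y <= X) by (unfold X, Y; apply Rle_pow; [lra|lia]).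
set (Bv := P.ev (P.BB p) x) in *.
assert (HBv : Bv = P.ev p (INR (S n)) ^ 2) by (unfold Bv, x; rewrite BBe, S_INR; reflexivity).
assert (HLv : P.ev (P.LQ p) x = P.ev p (INR (S n)) ^ 2 - P.ev p x * P.ev p (INR (S (S n))))
  by (unfold x; rewrite LQe, !S_INR; reflexivity).
set (A := P.ev p x * P.ev p (INR (S (S n)))) in *.
assert (HBlow : beta * X <= Rabs Bv) by (unfold beta; lra).
assert (HBpos : 0 < Rabs Bv) by nra.
assert (HBnz : Bv <> 0) by (intro H0; rewrite H0, Rabs_R0 in HBpos; lra).
pose proof (expand p d x (m - 2) Hx0 HBnz) as Hexp.
replace (m - 2 + 2)%nat with m in Hexp by lia.
fold xm in Hexp. fold Bv in Hexp.
set (D1 := Bv + E2 n).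
assert (HD1 : g (S n) ^ 2 = D1) by (unfold D1, E2; rewrite HBv; ring).
assert (HN1' : g n * g (S (S n)) = A + E1 n) by (unfold E1, A, x; ring).
assert (HE2b : Rabs (E2 n) <= beta / 2 * X).
{ apply Rle_trans with (delta * Y); [exact HN2|]. apply Rmult_le_compat; lra. }
assert (HD1low : beta / 2 * X <= Rabs D1).
{ unfold D1. pose proof (Rabs_triang (Bv + E2 n) (- E2 n)) as Ht.
  replace (Bv + E2 n + - E2 n) with Bv in Ht by ring. rewrite Rabs_Ropp in Ht. lra. }
assert (HD1nz : D1 <> 0) by (intro H0; rewrite H0, Rabs_R0 in HD1low; nra).
assert (Hdec : R2 g n - (1 + - INR d / x ^ 2 + sum_range 3 m (fun i => zc p d i / x ^ i))
  = ((E1 n * Bv - A * E2 n) * xm / (D1 * Bv) + P.ev (P.rem p d (m - 2)) x / Bv) / xm).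
{ unfold R2. rewrite HN1', HD1.
  assert (Hr : 1 + - INR d / x ^ 2 + sum_range 3 m (fun i => zc p d i / x ^ i) =
    (Bv - P.ev (P.LQ p) x) / Bv - P.ev (P.rem p d (m - 2)) x / (xm * Bv)) by (rewrite Hexp; ring).
  rewrite Hr, HLv. fold A.
  assert (Hbb : Bv - (P.ev p (INR (S n)) ^ 2 - A) = A) by (rewrite HBv; ring).
  rewrite Hbb. unfold D1. field. repeat split; try exact HD1nz; auto; lra. }
assert (HT1 : Rabs ((E1 n * Bv - A * E2 n) * xm / (D1 * Bv)) <= eps / 2).
{ apply Rle_trans with ((M * delta * X * X) / (beta / 2 * X * (beta * X))).
  - apply div_bound.
    + apply Rmult_lt_0_compat; nra.
    + rewrite Rabs_mult. apply Rmult_le_compat; nra.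
    + rewrite Rabs_mult, (Rabs_pos_eq xm) by lra.
      assert (Hnum : Rabs (E1 n * Bv - A * E2 n) <= M * delta * Y * X).
      { unfold Rminus. eapply Rle_trans; [apply Rabs_triang|]. rewrite Rabs_Ropp, !Rabs_mult.
        pose proof (Rabs_pos (E1 n)). pose proof (Rabs_pos (E2 n)). pose proof (Rabs_pos A).
        pose proof (Rabs_pos Bv).
        assert (HA' : Rabs A <= KA * X) by (unfold A, X; replace (2 * d)%nat with (d + d)%nat by lia; exact HA).
        assert (Rabs (E1 n) * Rabs Bv <= (delta * Y) * (KB * X)) by (apply Rmult_le_compat; auto).
        assert (Rabs A * Rabs (E2 n) <= (KA * X) * (delta * Y)) by (apply Rmult_le_compat; auto).
        unfold M. nra. }
      rewrite HXY at 2. replace (M * delta * X * (Y * xm)) with ((M * delta * Y * X) * xm) by ring.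
      apply Rmult_le_compat_r; lra.
  - replace (M * delta * X * X / (beta / 2 * X * (beta * X))) with (2 * M * delta / beta ^ 2)
      by (field; split; lra).
    apply Rle_trans with (2 * M * (eps * beta ^ 2 / (4 * M)) / beta ^ 2).
    + unfold Rdiv. apply Rmult_le_compat_r; [left; apply Rinv_0_lt_compat, pow_lt; lra|].
      apply Rmult_le_compat_l; lra.
    + right. field. split; lra. }
assert (HT2 : Rabs (P.ev (P.rem p d (m - 2)) x / Bv) <= eps / 2).
{ apply Rle_trans with ((Kr * x ^ (2 * d - 1)) / (beta * X)).
  - apply div_bound; auto. nra.
  - assert (HX' : X = x ^ (2 * d - 1) * x)
      by (unfold X; replace (2 * d)%nat with (S (2 * d - 1)) at 1 by lia; rewrite <- tech_pow_Rmult; ring).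
    assert (Hxp : 0 < x ^ (2 * d - 1)) by (apply pow_lt; lra).
    rewrite HX'. replace (Kr * x ^ (2 * d - 1) / (beta * (x ^ (2 * d - 1) * x))) with (Kr / (beta * x))
      by (field; repeat split; lra).
    assert (H2 : 2 * Kr / (beta * eps) <= x) by lra.
    assert (H3 : 2 * Kr <= x * (beta * eps)).
    { apply (Rmult_le_compat_r (beta * eps)) in H2; [|nra].
      unfold Rdiv in H2. rewrite Rmult_assoc, Rinv_l in H2 by nra. lra. }
    apply (Rmult_le_reg_r (beta * x)); [nra|].
    unfold Rdiv. rewrite Rmult_assoc, Rinv_l by nra. nra. }
rewrite Hdec.
set (U1 := (E1 n * Bv - A * E2 n) * xm / (D1 * Bv)) in *.
set (U2 := P.ev (P.rem p d (m - 2)) x / Bv) in *.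
assert (Hfin : Rabs ((U1 + U2) / xm) * xm = Rabs (U1 + U2)).
{ unfold Rdiv. rewrite Rabs_mult, Rabs_inv, (Rabs_pos_eq xm) by lra. field. lra. }
rewrite Hfin. eapply Rle_trans; [apply Rabs_triang|]. lra.
Qed.

Theorem theorem4p5 (l r : nat) (a : nat -> R) (f : nat -> R) :
  (1 <= r)%nat -> (2 * r <= l)%nat -> a l <> 0 ->
  little_o_pow
    (fun n => f n - sum_range (l - 2 * r) l (fun k => a k * INR n ^ k))
    (l - 2 * r) ->
  forall j : nat, (1 <= j <= r)%nat ->
    exists z : nat -> R,
      little_o_invpow
        (fun n => R2 (Lhat_iter (j - 1) f) n
                  - (1 + (2 ^ j - 2 ^ (j - 1) * INR l - 2) / INR n ^ 2
                     + sum_range 3 (2 * (r - j + 1)) (fun i => z i / INR n ^ i)))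
        (2 * (r - j + 1)).
Proof.
intros Hr Hl Ha Hf j Hj.
destruct (iter_inv l r a f Hr Hl Ha Hf (j - 1) ltac:(lia)) as [p [d [k [Hd [Hkm [Hp [Hc [Hdl He]]]]]]]].
assert (Hg : forall n, Lhat_iter (j - 1) f n = P.ev p (INR n) + (Lhat_iter (j - 1) f n - P.ev p (INR n)))
  by (intros; ring).
destruct (Rstep (Lhat_iter (j - 1) f) p d k (2 * (r - j + 1)) _ Hd ltac:(lia) ltac:(lia) Hp Hc Hg He)
  as [z Hz].
exists z. intros eps Heps. destruct (Hz eps Heps) as [N HN]. exists N. intros n Hn.
specialize (HN n Hn).
assert (Hco : 2 ^ j - 2 ^ (j - 1) * INR l - 2 = - INR d).
{ rewrite Hdl. replace (S (j - 1)) with j by lia. ring. }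
rewrite Hco. exact HN.
Qed.
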